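(* Let $\mathfrak{R}_1=(G,G'_1,S,\phi,\rho_1,\delta_1)$ and $\mathfrak{R}_2=(G,G'_2,S,\phi,\rho_2,\delta_2)$ be reconciliations (of the same $G$, $S$, $\phi$) and $x\in V(G)$. Then $\rho_1(x)$ and $\rho_2(x)$ are comparable in $S$ (one is an ancestor of the other).
   Context: All trees are rooted binary trees whose root node has degree 1; every other non-leaf node $x$ has exactly two children $x_l,x_r$. For nodes of a rooted tree, $y\le x$ means $x$ lies on the path from $y$ to the root; two nodes are comparable if one is $\le$ the other. $G$ is a gene tree, $S$ a species tree, $\phi:L(G)\to L(S)$. A tree $G'$ is an extension of $G$ if $G$ is obtained from $G'$ by pruning some subtrees and suppressing degree-2 nodes; $V(G)\subseteq V(G')$. A map $\rho:V(G')\to V(S)$ is consistent with $S$ if $\rho(root(G'))=root(S)$ and every node $x$ of $G'$ with two children satisfies (D) $\rho(x)=\rho(x_l)=\rho(x_r)$ or (S) $\rho(x)_l=\rho(x_l)$ and $\rho(x)_r=\rho(x_r)$. A reconciliation $(G,G',S,\phi,\rho,\delta)$ consists of an extension $G'$ of $G$, a consistent $\rho$ with $\rho|_{L(G)}=\phi$, and an injective partial function $\delta$ from duplications (nodes satisfying (D)) to losses ($L(G')\setminus L(G)$) with $\rho(x)=\rho(\delta(x))$. *)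

(* Defs.v *)
From mathcomp Require Import all_boot.
Set Implicit Arguments. Unset Strict Implicit. Unset Printing Implicit Defensive.

Inductive btree (N : Type) : Type :=
| Leaf : N -> btree N
| Bin : N -> btree N -> btree N -> btree N.
Arguments Leaf {N}.
Arguments Bin {N}.

(* A rooted (planted) tree: a root node of degree 1 whose unique child
   is the root of the binary tree [ptree]. *)
Record ptree_t (N : Type) := Planted { proot : N; ptree : btree N }.
Arguments Planted {N}.

Section Trees.
Variable N : eqType.

Definition root_id (t : btree N) : N :=
  match t with Leaf x => x | Bin x _ _ => x end.

Fixpoint bnodes (t : btree N) : seq N :=
  match t with
  | Leaf x => [:: x]
  | Bin x l r => x :: bnodes l ++ bnodes r
  end.

Fixpoint bleaves (t : btree N) : seq N :=
  match t with
  | Leaf x => [:: x]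
  | Bin _ l r => bleaves l ++ bleaves r
  end.

Definition pnodes (T : ptree_t N) : seq N := proot T :: bnodes (ptree T).
Definition pleaves (T : ptree_t N) : seq N := bleaves (ptree T).

Definition wf_tree (T : ptree_t N) : bool := uniq (pnodes T).

Fixpoint bkids (t : btree N) (v : N) : option (N * N) :=
  match t with
  | Leaf _ => None
  | Bin x l r =>
      if x == v then Some (root_id l, root_id r)
      else match bkids l v with
           | Some p => Some p
           | None => bkids r v
           end
  end.

Definition kids (T : ptree_t N) (v : N) : option (N * N) := bkids (ptree T) v.

(* nodes of the subtree rooted at v (empty if v is not a node of t) *)
Fixpoint bsub (t : btree N) (v : N) : seq N :=
  match t with
  | Leaf x => if x == v then [:: x] else [::]
  | Bin x l r => if x == v then bnodes t else bsub l v ++ bsub r v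
  end.

(* y <= x : x lies on the path from y to the root *)
Definition tree_le (T : ptree_t N) (y x : N) : Prop :=
  (x = proot T /\ y \in pnodes T) \/ (x <> proot T /\ y \in bsub (ptree T) x).

Definition tree_comparable (T : ptree_t N) (x y : N) : Prop := tree_le T x y \/ tree_le T y x.

(* Pruning the subtrees rooted at the nodes in P and suppressing the
   resulting degree-2 nodes.  [None] means that nothing is left. *)
Fixpoint prune (P : pred N) (t : btree N) : option (btree N) :=
  match t with
  | Leaf x => if P x then None else Some (Leaf x)
  | Bin x l r =>
      if P x then None else
      match prune P l, prune P r with
      | Some l', Some r' => Some (Bin x l' r')
      | Some l', None => Some l'
      | None, Some r' => Some r'
      | None, None => None
      end
  end.

Definition extension (G G' : ptree_t N) : Prop :=
  exists P : pred N, proot G = proot G' /\ prune P (ptree G') = Some (ptree G).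

End Trees.

Section Reconciliation.
Variables NG NS : eqType.

Definition consistent (G' : ptree_t NG) (S : ptree_t NS) (rho : NG -> NS) : Prop :=
  rho (proot G') = proot S /\
  forall x a b, kids G' x = Some (a, b) ->
    (rho x = rho a /\ rho x = rho b) \/ kids S (rho x) = Some (rho a, rho b).

Definition duplication (G' : ptree_t NG) (rho : NG -> NS) (x : NG) : Prop :=
  exists a b, kids G' x = Some (a, b) /\ rho x = rho a /\ rho x = rho b.

Definition reconciliation (G G' : ptree_t NG) (S : ptree_t NS)
    (phi : NG -> NS) (rho : NG -> NS) (delta : NG -> option NG) : Prop :=
  wf_tree G' /\ extension G G' /\
      (forall x, x \in pnodes G' -> rho x \in pnodes S) /\
      consistent G' S rho /\
      (forall x, x \in pleaves G -> rho x = phi x) /\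
      (forall x y, delta x = Some y ->
          [/\ duplication G' rho x, y \in pleaves G', y \notin pleaves G
            & rho x = rho y]) /\
      (forall x1 x2 y, delta x1 = Some y -> delta x2 = Some y -> x1 = x2).

End Reconciliation.

(* Main.v *)
Require Import Defs.
From mathcomp Require Import all_boot.
Set Implicit Arguments. Unset Strict Implicit. Unset Printing Implicit Defensive.

Section BT.
Variable N : eqType.
Implicit Types (t l r : btree N) (x v : N).

Lemma bsub_nodes t v : {subset bsub t v <= bnodes t}.
Proof.
elim: t => [x|x l IHl r IHr] y /=.
- by case: eqP.
- case: eqP => // _; rewrite mem_cat => /orP[/IHl|/IHr] H;
  by rewrite inE mem_cat H ?orbT.
Qed.

Lemma bsub_mem t v y : y \in bsub t v -> v \in bnodes t.
Proof.
elim: t => [x|x l IHl r IHr] /=.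
- by case: eqP => [->|] //; rewrite !inE.
- case: eqP => [-> _|_]; first by rewrite inE eqxx.
  rewrite mem_cat => /orP[/IHl|/IHr] H; by rewrite inE mem_cat H ?orbT.
Qed.

Lemma bsub_notin t v : v \notin bnodes t -> bsub t v = [::].
Proof.
move=> H; case E: (bsub t v) => [|y s] //.
have : y \in bsub t v by rewrite E inE eqxx.
by move/bsub_mem; rewrite (negbTE H).
Qed.

Lemma bsub_refl t v : v \in bnodes t -> v \in bsub t v.
Proof.
elim: t => [x|x l IHl r IHr] /=.
- by rewrite inE => /eqP ->; rewrite eqxx inE.
- case: eqP => [->|ne]; first by rewrite inE eqxx.
  rewrite inE mem_cat => /orP[/eqP E|/orP[H|H]].
  + by case: ne.
  + by rewrite mem_cat IHl.
  + by rewrite mem_cat IHr ?orbT.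
Qed.

Lemma bsub_root t : bsub t (root_id t) = bnodes t.
Proof. by case: t => [x|x l r] /=; rewrite eqxx. Qed.

Lemma root_mem t : root_id t \in bnodes t.
Proof. by case: t => [x|x l r] /=; rewrite inE eqxx. Qed.

Lemma bsub_bin_eq x l r : bsub (Bin x l r) x = bnodes (Bin x l r).
Proof. by rewrite /= eqxx. Qed.

Lemma bsub_bin_ne x l r v : x != v -> bsub (Bin x l r) v = bsub l v ++ bsub r v.
Proof. by move=> ne; rewrite /= (negbTE ne). Qed.

Lemma bkids_mem t v p : bkids t v = Some p -> v \in bnodes t.
Proof.
move: p; elim: t => [x|x l IHl r IHr] p //=.
case: eqP => [->|_]; first by rewrite inE eqxx.
case E: (bkids l v) => [q|].
- by move=> _; rewrite inE mem_cat (IHl _ E) orbT.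
- by move/IHr => H; rewrite inE mem_cat H !orbT.
Qed.

Lemma bkids_not t v : v \notin bnodes t -> bkids t v = None.
Proof.
move=> H; case E: (bkids t v) => [p|] //.
by rewrite (bkids_mem E) in H.
Qed.

Lemma bkids_sub t v a b : bkids t v = Some (a, b) -> a \in bsub t v /\ b \in bsub t v.
Proof.
elim: t => [x|x l IHl r IHr] //.
case: (eqVneq x v) => [<-|ne].
- rewrite bsub_bin_eq /= eqxx => -[<- <-].
  by rewrite !inE !mem_cat !root_mem !orbT.
- rewrite bsub_bin_ne // /= (negbTE ne) !mem_cat.
  case E: (bkids l v) => [q|].
  + by case=> Eq; subst q; case: (IHl E) => -> ->.
  + by move/IHr => [-> ->]; rewrite !orbT.
Qed.

Lemma uniq_bin x l r : uniq (bnodes (Bin x l r)) ->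
  [/\ x \notin bnodes l, x \notin bnodes r, uniq (bnodes l), uniq (bnodes r)
    & forall z, z \in bnodes l -> z \notin bnodes r].
Proof.
rewrite /= mem_cat negb_or cat_uniq => /andP[/andP[xl xr] /and3P[ul dlr ur]].
split=> // z zl; apply/negP => zr.
by move/hasP: dlr; apply; exists z.
Qed.

Lemma bsub_trans t v y : uniq (bnodes t) -> y \in bsub t v -> {subset bsub t y <= bsub t v}.
Proof.
elim: t => [x|x l IHl r IHr].
- move=> _ /=; case: (x =P v) => [_|] //; rewrite inE => /eqP ->; by rewrite eqxx.
move=> U; case/uniq_bin: (U) => xl xr ul ur d.
case: (eqVneq x v) => [<-|ne].
- by rewrite bsub_bin_eq => _ z /bsub_nodes.
rewrite bsub_bin_ne // mem_cat => /orP[H|H] z.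
- have yl := bsub_nodes H.
  have nxy : x != y by apply/eqP => E; subst y; rewrite yl in xl.
  rewrite bsub_bin_ne // (bsub_notin (d _ yl)) cats0 => /(IHl ul H).
  by rewrite mem_cat => ->.
- have yr := bsub_nodes H.
  have yl : y \notin bnodes l by apply/negP => /d; rewrite yr.
  have nxy : x != y by apply/eqP => E; subst y; rewrite yr in xr.
  rewrite bsub_bin_ne // (bsub_notin yl) /= => /(IHr ur H).
  by rewrite mem_cat => ->; rewrite orbT.
Qed.

Lemma bsub_comp t a b z : uniq (bnodes t) -> z \in bsub t a -> z \in bsub t b ->
  a \in bsub t b \/ b \in bsub t a.
Proof.
elim: t => [x|x l IHl r IHr].
- move=> _ /=; case: (x =P a) => [<-|] //; case: (x =P b) => [<-|] // _ _; rewrite inE eqxx; by left.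
move=> U; case/uniq_bin: (U) => xl xr ul ur d.
case: (eqVneq x a) => [<-|nea].
  by move=> _ /bsub_mem H; right; rewrite bsub_bin_eq.
case: (eqVneq x b) => [<-|neb].
  by move=> /bsub_mem H _; left; rewrite bsub_bin_eq.
rewrite !bsub_bin_ne // !mem_cat => /orP[Ha|Ha] /orP[Hb|Hb].
- by case: (IHl ul Ha Hb) => ->; [left|right].
- by have := d _ (bsub_nodes Ha); rewrite (bsub_nodes Hb).
- by have := d _ (bsub_nodes Hb); rewrite (bsub_nodes Ha).
- by case: (IHr ur Ha Hb) => ->; rewrite orbT; [left|right].
Qed.

Lemma prune_nodes (P : pred N) t t' : prune P t = Some t' -> {subset bnodes t' <= bnodes t}.
Proof.
elim: t t' => [x|x l IHl r IHr] t' /=.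
- by case: (P x) => // -[<-].
case: (P x) => //.
case El: (prune P l) => [l'|]; case Er: (prune P r) => [r'|] // [<-] y.
- rewrite /= !inE !mem_cat => /orP[->//|/orP[/(IHl _ El)->|/(IHr _ Er)->]];
  by rewrite ?orbT.
- by move/(IHl _ El) => H; rewrite inE mem_cat H orbT.
- by move/(IHr _ Er) => H; rewrite inE mem_cat H !orbT.
Qed.

Lemma prune_sub (P : pred N) t t' : prune P t = Some t' ->
  forall z, {subset bsub t' z <= bsub t z}.
Proof.
elim: t t' => [x|x l IHl r IHr] t' /=.
- by case: (P x) => // -[<-] z y.
case: (P x) => //.
case El: (prune P l) => [l'|]; case Er: (prune P r) => [r'|] // [<-] z y.
- rewrite /=; case: eqP => _.
  + rewrite !inE !mem_cat => /orP[->//|/orP[/(prune_nodes El)->|/(prune_nodes Er)->]];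
    by rewrite ?orbT.
  + by rewrite !mem_cat => /orP[/(IHl _ El z)->|/(IHr _ Er z)->]; rewrite ?orbT.
- move/(IHl _ El z) => H; case: eqP => _.
  + by rewrite inE mem_cat (bsub_nodes H) !orbT.
  + by rewrite mem_cat H.
- move/(IHr _ Er z) => H; case: eqP => _.
  + by rewrite inE mem_cat (bsub_nodes H) !orbT.
  + by rewrite mem_cat H orbT.
Qed.

Lemma leaf_below t x : x \in bnodes t -> exists2 l, l \in bleaves t & l \in bsub t x.
Proof.
elim: t x => [y|y l IHl r IHr] x /=.
- by rewrite inE => /eqP ->; exists y; rewrite ?eqxx inE.
case: eqP => [->|ne].
- move=> _; case: (IHl (root_id l) (root_mem l)) => z zl; rewrite bsub_root => zn.
  by exists z; rewrite ?mem_cat ?zl // inE mem_cat zn orbT.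
rewrite inE mem_cat => /orP[/eqP E|/orP[H|H]]; first by case: ne.
- by case: (IHl _ H) => z zl zs; exists z; rewrite mem_cat ?zl ?zs.
- by case: (IHr _ H) => z zl zs; exists z; rewrite mem_cat ?zl ?zs ?orbT.
Qed.

End BT.

Section ST.
Variable NS : eqType.
Variable S : ptree_t NS.
Hypothesis wfS : wf_tree S.

Lemma proot_notin : proot S \notin bnodes (ptree S).
Proof. by move: wfS; rewrite /wf_tree /pnodes /= => /andP[]. Qed.

Lemma uS : uniq (bnodes (ptree S)).
Proof. by move: wfS; rewrite /wf_tree /pnodes /= => /andP[]. Qed.

Lemma tle_refl a : a \in pnodes S -> tree_le S a a.
Proof.
move=> H; case: (eqVneq a (proot S)) => [E|ne]; first by left.
right; split; first by apply/eqP.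
by apply: bsub_refl; move: H; rewrite inE (negbTE ne).
Qed.

Lemma tle_mem z b : tree_le S z b -> b \in pnodes S /\ z \in pnodes S.
Proof.
case=> [[-> H]|[_ H]]; first by rewrite inE eqxx.
by rewrite !inE (bsub_mem H) (bsub_nodes H) !orbT.
Qed.

Lemma tle_trans z y x : tree_le S z y -> tree_le S y x -> tree_le S z x.
Proof.
move=> H1 H2; case: H2 => [[-> _]|[ne H2]].
  by left; split=> //; case: (tle_mem H1).
right; split=> //.
case: H1 => [[E _]|[_ H1]].
  by subst y; have := proot_notin; rewrite (bsub_nodes H2).
exact: (bsub_trans uS H2).
Qed.

Lemma tle_kid p a b : kids S p = Some (a, b) -> tree_le S a p /\ tree_le S b p.
Proof.
move=> E; have pn := bkids_mem E.
have ne : p <> proot S by move=> E'; have := proot_notin; rewrite -E' pn.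
by case: (bkids_sub E) => Ha Hb; split; right.
Qed.

Lemma tle_comp z a b : tree_le S z a -> tree_le S z b -> tree_comparable S a b.
Proof.
move=> Ha Hb.
case: Ha => [[-> _]|[nea Ha]].
  by right; left; split=> //; case: (tle_mem Hb).
case: Hb => [[-> _]|[neb Hb]].
  by left; left; split=> //; case: (tle_mem (or_intror (conj nea Ha))).
case: (bsub_comp uS Ha Hb) => H; [left|right]; by right.
Qed.

Lemma mono (NG : eqType) (rho : NG -> NS) (t : btree NG) :
  uniq (bnodes t) ->
  (forall y, y \in bnodes t -> rho y \in pnodes S) ->
  (forall x a b, bkids t x = Some (a, b) ->
     (rho x = rho a /\ rho x = rho b) \/ kids S (rho x) = Some (rho a, rho b)) ->
  forall v y, y \in bsub t v -> tree_le S (rho y) (rho v).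
Proof.
elim: t => [x|x l IHl r IHr] U Hn Hk v y.
- rewrite /=; case: eqP => // <-; rewrite inE => /eqP ->.
  by apply: tle_refl; apply: Hn; rewrite inE.
case/uniq_bin: (U) => xl xr ul ur d.
have Hnl : forall y, y \in bnodes l -> rho y \in pnodes S.
  by move=> z zl; apply: Hn; rewrite inE mem_cat zl orbT.
have Hnr : forall y, y \in bnodes r -> rho y \in pnodes S.
  by move=> z zl; apply: Hn; rewrite inE mem_cat zl !orbT.
have Hkl : forall w a b, bkids l w = Some (a, b) ->
     (rho w = rho a /\ rho w = rho b) \/ kids S (rho w) = Some (rho a, rho b).
  move=> w a b E; apply: Hk; have wl := bkids_mem E.
  have nw : x != w by apply/eqP => E'; subst w; rewrite wl in xl.
  by rewrite /= (negbTE nw) E.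
have Hkr : forall w a b, bkids r w = Some (a, b) ->
     (rho w = rho a /\ rho w = rho b) \/ kids S (rho w) = Some (rho a, rho b).
  move=> w a b E; apply: Hk; have wr := bkids_mem E.
  have wl : w \notin bnodes l by apply/negP => /d; rewrite wr.
  have nw : x != w by apply/eqP => E'; subst w; rewrite wr in xr.
  by rewrite /= (negbTE nw) (bkids_not wl) E.
have xS : rho x \in pnodes S by apply: Hn; rewrite inE eqxx.
have step : tree_le S (rho (root_id l)) (rho x) /\ tree_le S (rho (root_id r)) (rho x).
  have : bkids (Bin x l r) x = Some (root_id l, root_id r) by rewrite /= eqxx.
  move/Hk => [[<- <-]|/tle_kid //].
  by split; apply: tle_refl.
case: (eqVneq x v) => [<-|ne].
- rewrite bsub_bin_eq inE mem_cat => /orP[/eqP ->|/orP[H|H]].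
  + exact: tle_refl.
  + have {}H : y \in bsub l (root_id l) by rewrite bsub_root.
    apply: tle_trans (IHl ul Hnl Hkl _ _ H) _; by case: step.
  + have {}H : y \in bsub r (root_id r) by rewrite bsub_root.
    apply: tle_trans (IHr ur Hnr Hkr _ _ H) _; by case: step.
- rewrite bsub_bin_ne // mem_cat => /orP[H|H].
  + exact: (IHl ul Hnl Hkl _ _ H).
  + exact: (IHr ur Hnr Hkr _ _ H).
Qed.

End ST.

Lemma key (NG NS : eqType) (G : ptree_t NG) (S : ptree_t NS) (phi : NG -> NS)
    (G1 : ptree_t NG) (rho1 : NG -> NS) (delta1 : NG -> option NG) x l :
  wf_tree S -> reconciliation G G1 S phi rho1 delta1 ->
  l \in bleaves (ptree G) -> l \in bsub (ptree G) x -> tree_le S (phi l) (rho1 x).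
Proof.
move=> wfS [wf1 [[P [er pr]] [n1 [[cr cs] [lf _]]]]] lG lx.
rewrite -lf; last by [].
have U : uniq (bnodes (ptree G1)) by move: wf1; rewrite /wf_tree /pnodes /= => /andP[].
apply: (mono wfS U) => //.
- by move=> y yn; apply: n1; rewrite inE yn orbT.
- exact: (prune_sub pr).
Qed.

Theorem lemma5 (NG NS : eqType) (G : ptree_t NG) (S : ptree_t NS) (phi : NG -> NS)
    (G1 : ptree_t NG) (rho1 : NG -> NS) (delta1 : NG -> option NG)
    (G2 : ptree_t NG) (rho2 : NG -> NS) (delta2 : NG -> option NG) (x : NG) :
  wf_tree G -> wf_tree S ->
  (forall y, y \in pleaves G -> phi y \in pleaves S) ->
  reconciliation G G1 S phi rho1 delta1 ->
  reconciliation G G2 S phi rho2 delta2 ->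
  x \in pnodes G ->
  tree_comparable S (rho1 x) (rho2 x).
Proof.
move=> _ wfS _ R1 R2 xG.
case: (eqVneq x (proot G)) => [E|ne].
- case: R1 => _ [[P1 [er1 _]] [_ [[cr1 _] _]]].
  case: R2 => _ [[P2 [er2 _]] [_ [[cr2 _] _]]].
  rewrite E er1 cr1 -er1 er2 cr2.
  by left; left; split=> //; rewrite inE eqxx.
have xb : x \in bnodes (ptree G) by move: xG; rewrite inE (negbTE ne).
case: (leaf_below xb) => l lG lx.
exact: (tle_comp wfS (key wfS R1 lG lx) (key wfS R2 lG lx)).
Qed.
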